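(* Let $F$ be an algebraically closed field of characteristic zero, $A(x)$ a nonsingular $n\times n$ matrix over $F[x]$, and $P(x),Q(x)$ invertible matrices over $F[x]$ with $P(x)A(x)Q(x)=\Phi(x)=\mathrm{diag}(\varphi_1(x),\dots,\varphi_n(x))$, the Smith form of $A(x)$ with monic diagonal entries. Let $s\ge1$ be an integer. Then there exists an invertible $U(x)$ over $F[x]$ with $A(x)U(x)=Ix^s-D_{s-1}x^{s-1}-\dots-D_0$ for some $D_i\in M_n(F)$ if and only if (1) $\deg\det A(x)=ns$ and (2) $\det M_{P(x)\,\|I\ \ Ix\ \ \cdots\ \ Ix^{s-1}\|}(\Phi)\neq0$, where $\|I\ Ix\ \cdots\ Ix^{s-1}\|$ is the $n\times ns$ block row matrix.
   Context: For a $1\times m$ row $g(x)$ over $F[x]$ and a monic $\varphi(x)=\prod_{j=1}^r(x-\alpha_j)^{k_j}$ with distinct $\alpha_j\in F$, $M_{g}(\varphi)$ is the $(\deg\varphi)\times m$ matrix over $F$ obtained by stacking, for $j=1,\dots,r$, the rows $g(\alpha_j),g'(\alpha_j),\dots,g^{(k_j-1)}(\alpha_j)$ (entrywise derivatives); it is empty if $\deg\varphi=0$. For an $n\times m$ matrix $G(x)$ with rows $g_1(x),\dots,g_n(x)$ and $\Phi=\mathrm{diag}(\varphi_1,\dots,\varphi_n)$ with monic $\varphi_i$, $M_{G}(\Phi)$ is the matrix obtained by stacking $M_{g_1}(\varphi_1),\dots,M_{g_n}(\varphi_n)$; it has $\deg\det\Phi$ rows (the ordering of roots affects it only by a row permutation).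 The Smith form of $A(x)$ is a diagonal matrix $\mathrm{diag}(\varphi_1,\dots,\varphi_n)$, $\varphi_i\mid\varphi_{i+1}$, equivalent to $A(x)$. *)

(* Defs.v *)
From HB Require Import structures.
From mathcomp Require Import all_boot all_order all_algebra.
Set Implicit Arguments. Unset Strict Implicit. Unset Printing Implicit Defensive.
Import GRing.Theory.
Local Open Scope ring_scope.

Section MDefs.
Variable F : closedFieldType.

(* A list of the roots of p, each repeated according to its multiplicity
   (for p monic, p = \prod_(z <- roots_with_mult p) ('X - z%:P)). *)
Definition roots_with_mult (p : {poly F}) : seq F :=
  sval (closed_field_poly_normal p).

(* The rows of M_g(phi): for each distinct root a of phi of multiplicity k,
   the rows g(a), g'(a), ..., g^(k-1)(a) (entrywise derivatives). *)
Definition Mrows (m : nat) (g : 'rV[{poly F}]_m) (phi : {poly F}) : seq 'rV[F]_m :=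
  let rs := roots_with_mult phi in
  flatten [seq [seq \row_j ((g 0 j)^`(k)).[a] | k <- iota 0 (count_mem a rs)]
          | a <- undup rs].

Definition MGrows (n m : nat) (G : 'M[{poly F}]_(n, m)) (phi : 'I_n -> {poly F})
  : seq 'rV[F]_m :=
  flatten [seq Mrows (row i G) (phi i) | i <- enum 'I_n].

Definition mx_of_rows (N : nat) (r : seq 'rV[F]_N) : 'M[F]_N :=
  \matrix_(i < N, j < N) (nth 0 r i) 0 j.

(* The n x ns block row matrix || I  Ix  ...  Ix^(s-1) ||. *)
Definition block_powers (n s : nat) : 'M[{poly F}]_(n, n * s) :=
  \matrix_(i < n, j < n * s) (if (i == (j %% n)%N :> nat) then 'X^(j %/ n)%N else 0).

End MDefs.

(* Main.v *)
Require Import Defs.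
From HB Require Import structures.
From mathcomp Require Import all_boot all_order all_algebra.
From mathcomp Require Import zify all_fingroup.
Import GRing.Theory.
Local Open Scope ring_scope.

Set Implicit Arguments. Unset Strict Implicit. Unset Printing Implicit Defensive.

Section Div.
Variable F : closedFieldType.
Hypothesis char0 : [pchar F] =i pred0.

Lemma derivn_XsubCM (a : F) (q : {poly F}) l :
  (('X - a%:P) * q)^`(l.+1) = q^`(l) *+ l.+1 + ('X - a%:P) * q^`(l.+1).
Proof.
elim: l => [|l IH].
  by rewrite derivn1 derivM derivXsubC mul1r derivn0 derivn1.
rewrite derivnS IH derivD derivMn derivM derivXsubC mul1r -!derivnS.
by rewrite addrA [_ *+ l.+2]mulrSr.
Qed.

Lemma dvd_XsubCX_derivn (a : F) k (p : {poly F}) :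
  (forall l, (l < k)%N -> (p^`(l)).[a] = 0) -> ('X - a%:P) ^+ k %| p.
Proof.
elim: k p => [|k IH] p H; first by rewrite expr0 dvd1p.
have ra : root p a by rewrite /root -(derivn0 p) H.
have [q Dp] := factor_theorem p a ra.
rewrite Dp exprSr dvdp_mul ?dvdpp //; apply: IH => l lk.
have := H l.+1 lk; rewrite Dp mulrC derivn_XsubCM hornerD hornerM.
rewrite hornerXsubC subrr mul0r addr0 hornerMn -mulr_natr.
move/eqP; rewrite mulf_eq0 => /orP[/eqP //|].
by move/(pcharf0P _).1: char0 => ->.
Qed.

Lemma dvd_prod_exp (u : seq F) (c : F -> nat) (p : {poly F}) :
  uniq u -> (forall a, a \in u -> ('X - a%:P) ^+ c a %| p) ->
  \prod_(a <- u) ('X - a%:P) ^+ c a %| p.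
Proof.
elim: u => [|a u IH] /=; first by rewrite big_nil dvd1p.
move=> /andP[au uu] H; rewrite big_cons Gauss_dvdp.
  by rewrite H ?mem_head // IH // => b bu; rewrite H // inE bu orbT.
apply: coprimep_expl; rewrite coprimep_sym.
elim: u au {IH uu H} => [|b u IH] /=; first by rewrite big_nil coprimep_XsubC rootC oner_eq0.
rewrite inE negb_or => /andP[ab au]; rewrite big_cons coprimepMl IH // andbT.
apply: coprimep_expl; by rewrite coprimep_XsubC root_XsubC.
Qed.

Lemma rwm_prod (p : {poly F}) : p \is monic ->
  p = \prod_(z <- roots_with_mult p) ('X - z%:P).
Proof.
move=> mp; rewrite /roots_with_mult; case: closed_field_poly_normal => r /= Dp.
by rewrite {1}Dp (monicP mp) scale1r.
Qed.

Lemma size_rwm (p : {poly F}) : p \is monic ->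
  size (roots_with_mult p) = (size p).-1.
Proof. by move=> mp; rewrite {2}(rwm_prod mp) size_prod_XsubC. Qed.

Lemma dvd_roots (phi p : {poly F}) : phi \is monic ->
  (forall a k, a \in roots_with_mult phi -> (k < count_mem a (roots_with_mult phi))%N ->
     (p^`(k)).[a] = 0) -> phi %| p.
Proof.
move=> mp H; rewrite {1}(rwm_prod mp) -prodr_undup_exp_count.
apply: dvd_prod_exp (undup_uniq _) _ => a; rewrite mem_undup => ar.
by apply: dvd_XsubCX_derivn => l lk; apply: H.
Qed.
End Div.

Unset Implicit Arguments.

Set Implicit Arguments. Unset Strict Implicit. Unset Printing Implicit Defensive.

Section Rows.
Variable F : closedFieldType.
Hypothesis char0 : [pchar F] =i pred0.
Variables (n N : nat) (phi : 'I_n -> {poly F}).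
Hypothesis hmonic : forall i, phi i \is monic.

Definition trip : seq ('I_n * F * nat) :=
  flatten [seq flatten [seq [seq (i, a, k) | k <- iota 0 (count_mem a (roots_with_mult (phi i)))]
     | a <- undup (roots_with_mult (phi i))] | i <- enum 'I_n].

Definition rowf (G : 'M[{poly F}]_(n, N)) (t : 'I_n * F * nat) : 'rV[F]_N :=
  \row_j ((G t.1.1 j)^`(t.2)).[t.1.2].

Lemma MGrows_map G : MGrows G phi = map (rowf G) trip.
Proof.
rewrite /MGrows /trip map_flatten; congr flatten; rewrite -[RHS]map_comp.
apply: eq_map => i /=.
rewrite /Mrows map_flatten; congr flatten; rewrite -[RHS]map_comp; apply: eq_map => a /=.
rewrite -[RHS]map_comp; apply: eq_map => k /=; apply/rowP => j; rewrite !mxE //.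
Qed.

Lemma size_flatten_map (T U : Type) (f : T -> seq U) (s : seq T) :
  size (flatten (map f s)) = (\sum_(x <- s) size (f x))%N.
Proof. by elim: s => [|x s IH]; rewrite ?big_nil ?big_cons //= size_cat IH. Qed.

Lemma sum_count_undup (T : eqType) (r : seq T) :
  (\sum_(a <- undup r) count_mem a r)%N = size r.
Proof.
rewrite -sum1_size -[RHS]big_undup_iterop_count; apply: eq_bigr => a _.
case: (count_mem a r) => // k; elim: k => // k IH.
by rewrite /= in IH *; rewrite IH.
Qed.

Lemma size_prod_monic (I : Type) (r : seq I) (f : I -> {poly F}) :
  (forall i, f i \is monic) ->
  (size (\prod_(i <- r) f i)).-1 = (\sum_(i <- r) (size (f i)).-1)%N.
Proof.
move=> mf; elim: r => [|x r IH]; first by rewrite !big_nil size_poly1.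
rewrite !big_cons size_Mmonic ?monic_neq0 ?monic_prod // -IH.
have h1 := monic_neq0 (mf x).
have h2 : \prod_(j <- r) f j != 0 by rewrite monic_neq0 // monic_prod.
rewrite -size_poly_gt0 in h1; rewrite -size_poly_gt0 in h2.
move: h1 h2; case: (size (f x)) => // a _; case: (size _) => // b _.
by rewrite addSn addnS.
Qed.

Lemma size_trip : size trip = (size (\prod_i phi i)).-1.
Proof.
rewrite size_prod_monic // /trip size_flatten_map; rewrite big_enum /=; apply: eq_bigr => i _.
rewrite size_flatten_map -(size_rwm (hmonic i)) -sum_count_undup.
by apply: eq_bigr => a _; rewrite size_map size_iota.
Qed.

Lemma mem_trip i a k : a \in roots_with_mult (phi i) ->
  (k < count_mem a (roots_with_mult (phi i)))%N -> (i, a, k) \in trip.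
Proof.
move=> ar kc; apply/flattenP.
exists (flatten [seq [seq (i, a, k) | k <- iota 0 (count_mem a (roots_with_mult (phi i)))]
     | a <- undup (roots_with_mult (phi i))]).
  by apply/mapP; exists i; rewrite ?mem_enum.
apply/flattenP; exists [seq (i, a, k) | k <- iota 0 (count_mem a (roots_with_mult (phi i)))].
  by apply/mapP; exists a; rewrite ?mem_undup.
by apply/mapP; exists k; rewrite // mem_iota.
Qed.

Lemma nth_MG G (t0 : 'I_n * F * nat) t : t \in trip ->
  nth 0 (MGrows G phi) (index t trip) = rowf G t.
Proof.
move=> tT; rewrite MGrows_map (nth_map t0) ?index_mem // nth_index //.
Qed.

Lemma Mdata (G : 'M[{poly F}]_(n, N)) (c : 'cV[F]_N) (v : 'cV[{poly F}]_n)
  (t0 : 'I_n * F * nat) :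
  size trip = N ->
  mx_of_rows (MGrows G phi) *m c =
    \col_r (let t := nth t0 trip r in ((v t.1.1 0)^`(t.2)).[t.1.2])
  -> forall i, phi i %| (G *m map_mx polyC c) i 0 - v i 0.
Proof.
move=> sT E i; apply: dvd_roots => // a k ar kc.
have tT := mem_trip ar kc.
have rN : (index (i, a, k) trip < N)%N by rewrite -sT index_mem.
have := congr1 (fun M : 'cV_N => M (Ordinal rN) 0) E; rewrite !mxE /=.
rewrite nth_index //.
under eq_bigr do rewrite mxE /= (nth_MG G t0 tT) mxE /=.
move=> E2; rewrite derivnB hornerD hornerN /= -E2.
rewrite raddf_sum horner_sum /=; apply/eqP; rewrite subr_eq0; apply/eqP; apply: eq_bigr => j _.
rewrite !mxE mulrC mul_polyC derivnZ hornerZ mulrC //.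
Qed.
End Rows.

Unset Implicit Arguments.

Set Implicit Arguments. Unset Strict Implicit. Unset Printing Implicit Defensive.

Section Blk.
Variable F : closedFieldType.

Lemma size_sum_leq (I : finType) (P : pred I) (f : I -> {poly F}) m :
  (forall i, P i -> (size (f i) <= m)%N) -> (size (\sum_(i | P i) f i)%R <= m)%N.
Proof. by move=> H; apply: leq_trans (size_sum _ _ _) _; apply/bigmax_leqP. Qed.

Variables (n s : nat).

Lemma Bc_entry (c : 'cV[F]_(n * s)) i :
  (block_powers F n s *m map_mx polyC c) i 0 =
  \sum_(j < n * s) (if (i : nat) == (j %% n)%N then 'X^(j %/ n) * (c j 0)%:P else 0).
Proof.
rewrite mxE; apply: eq_bigr => j _; rewrite !mxE.
by case: ifP => _; rewrite ?mul0r.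
Qed.

Lemma size_Bc (c : 'cV[F]_(n * s)) i :
  (size ((block_powers F n s *m map_mx polyC c) i ord0) <= s)%N.
Proof.
rewrite Bc_entry; apply: size_sum_leq => j _; case: ifP => _; last by rewrite size_poly0.
apply: leq_trans (size_mul_leq _ _) _; rewrite size_polyXn.
have := size_polyC_leq1 (c j 0); have := ltn_ord j.
have n0 : (0 < n)%N by case: (n) j => [[]|].
move=> h1; have h3 : (j %/ n < s)%N by rewrite ltn_divLR //; lia.
move=> h2; lia.
Qed.

Lemma coef_Bc (c : 'cV[F]_(n * s)) (j : 'I_(n * s)) (i : 'I_n) :
  i = (j %% n)%N :> nat ->
  ((block_powers F n s *m map_mx polyC c) i 0)`_(j %/ n) = c j 0.
Proof.
move=> ij; rewrite Bc_entry coef_sum (bigD1 j) //= ij eqxx coefMC coefXn eqxx mul1r.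
rewrite big1 ?addr0 // => l lj; case: ifP => [/eqP h|]; last by rewrite coef0.
rewrite coefMC coefXn; case: eqP => [h2|]; last by rewrite mul0r.
case/eqP: lj; apply: val_inj => /=.
by rewrite (divn_eq l n) (divn_eq j n) -h -h2 -ij.
Qed.

Lemma Bc_inj (c : 'cV[F]_(n * s)) :
  block_powers F n s *m map_mx polyC c = 0 -> c = 0.
Proof.
move=> H; apply/matrixP => j o; rewrite ord1 mxE.
have n0 : (0 < n)%N by case: (n) j => [[]|].
have := coef_Bc c (i := Ordinal (ltn_pmod j n0)) erefl.
by rewrite H mxE coef0 => <-.
Qed.
End Blk.

Unset Implicit Arguments.

Set Implicit Arguments. Unset Strict Implicit. Unset Printing Implicit Defensive.

Section Mon.
Variable F : closedFieldType.
Variables (n s : nat) (D : 'I_s -> 'M[F]_n).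

Definition monmx : 'M[{poly F}]_n :=
  'X^s *: 1%:M - \sum_(k < s) 'X^k *: map_mx polyC (D k).

Definition qmx i j : {poly F} := \sum_(k < s) 'X^k * (D k i j)%:P.

Lemma monmx_entry i j : monmx i j = (if i == j then 'X^s else 0) - qmx i j.
Proof.
rewrite /monmx /qmx !mxE summxE; congr (_ - _).
  by case: eqP => _; rewrite ?mulr1n ?mulr0n ?scaler0 // ?mulr1 // ?mulr0.
by apply: eq_bigr => k _; rewrite !mxE.
Qed.

Lemma size_qmx i j : (size (qmx i j) <= s)%N.
Proof.
apply: size_sum_leq => k _; apply: leq_trans (size_mul_leq _ _) _.
rewrite size_polyXn; have := size_polyC_leq1 (D k i j); have := ltn_ord k; lia.
Qed.

Lemma monmx_diag i : monmx i i \is monic /\ size (monmx i i) = s.+1.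
Proof.
rewrite monmx_entry eqxx.
have h : (size (- qmx i i) < size ('X^s : {poly F}))%N.
  by rewrite size_polyN size_polyXn ltnS size_qmx.
split; first by rewrite monicE lead_coefDl // lead_coefXn.
by rewrite size_polyDl // size_polyXn.
Qed.

Lemma monmx_off i j : i != j -> (size (monmx i j) <= s)%N.
Proof. by move/negbTE=> h; rewrite monmx_entry h sub0r size_polyN size_qmx. Qed.

Lemma monmx_any i j : (size (monmx i j) <= s.+1)%N.
Proof.
case: (eqVneq i j) => [->|h]; first by rewrite (monmx_diag j).2.
exact: leq_trans (monmx_off h) _.
Qed.

Lemma size_det_monmx : size (\det monmx) = (n * s).+1.
Proof.
rewrite /determinant (bigD1 (1%g : 'S_n)) //= odd_perm1 expr0 mul1r.
under eq_bigr do rewrite perm1.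
have mP : \prod_i monmx i i \is monic by apply: monic_prod => i _; exact: (monmx_diag i).1.
have sP : size (\prod_i monmx i i) = (n * s).+1.
  have := size_prod_monic (index_enum 'I_n) (fun i => (monmx_diag i).1).
  have := monic_neq0 mP; rewrite -size_poly_gt0.
  case: (size _) => // k _ /= ->.
  rewrite (eq_bigr (fun _ => s)); last by move=> i _; rewrite (monmx_diag i).2.
  by rewrite big_const_ord iter_addn_0 mulnC.
rewrite size_polyDl sP // ltnS.
apply: size_sum_leq => p /= p1; rewrite mulr_sign.
have [i0 hi0] : exists i0, p i0 != i0.
  apply/existsP; apply: contraR p1 => /existsPn h; apply/eqP/permP => i.
  by rewrite perm1; apply/eqP; rewrite -[_ == _]negbK h.
suff: (size (\prod_i monmx i (p i))%R <= n * s)%N by case: ifP; rewrite ?size_polyN.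
apply: leq_trans (size_poly_prod_leq _ _) _.
have h1 : (\sum_i size (monmx i (p i)) + 1 <= \sum_(i < n) s.+1)%N.
  rewrite (bigD1 i0) //= [X in (_ <= X)%N](bigD1 i0) //=.
  have b : (size (monmx i0 (p i0)) <= s)%N by rewrite monmx_off // eq_sym.
  rewrite -addnA addn1 addSnnS; apply: leq_add; first exact: b.
  by rewrite ltnS; apply: leq_sum => i _; exact: monmx_any.
move: h1; rewrite big_const_ord iter_addn_0 cardT size_enum_ord; nia.
Qed.
End Mon.

Unset Implicit Arguments.

Set Implicit Arguments. Unset Strict Implicit. Unset Printing Implicit Defensive.

Section Ker.
Variable F : closedFieldType.
Variables (n s : nat) (D : 'I_s -> 'M[F]_n).

Lemma monmx_mul (w : 'cV[{poly F}]_n) i :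
  (monmx D *m w) i 0 = 'X^s * w i 0 - \sum_j qmx D i j * w j 0.
Proof.
rewrite mxE; under eq_bigr do rewrite monmx_entry mulrBl.
rewrite sumrB (bigD1 i) //= eqxx big1 ?addr0 // => j /negbTE; rewrite eq_sym => ->.
by rewrite mul0r.
Qed.

Lemma monmx_ker (w : 'cV[{poly F}]_n) (c : 'cV[F]_(n * s)) :
  monmx D *m w = block_powers F n s *m map_mx polyC c -> w = 0.
Proof.
move=> E; apply/matrixP => i o; rewrite ord1 mxE; apply/eqP/negPn/negP => wi.
have [i1 _ Hmax] := @arg_maxnP 'I_n i xpredT (fun i => size (w i 0)%R) isT.
have d0 : (0 < size ((w i1 0)%R))%N.
  by apply: leq_trans (Hmax i isT); rewrite size_poly_gt0.
have wi1 : (w i1 0)%R != 0 by rewrite -size_poly_gt0.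
have h1 : size ('X^s * (w i1 0)%R) = (s + size ((w i1 0)%R))%N.
  by rewrite mulrC size_mulXn.
have h2 : (size (\sum_j qmx D i1 j * (w j 0)%R)%R < s + size ((w i1 0)%R))%N.
  apply: leq_trans (_ : (s + size ((w i1 0)%R)).-1.+1 <= _)%N; last by rewrite prednK // addn_gt0 d0 orbT.
  rewrite ltnS; apply: size_sum_leq => j _; apply: leq_trans (size_mul_leq _ _) _.
  have := size_qmx D i1 j; have := Hmax j isT; lia.
have := congr1 (fun M : 'cV[{poly F}]_n => size (M i1 ord0)) E; rewrite /= monmx_mul.
rewrite size_polyDl ?size_polyN h1 // => h3.
have := size_Bc c i1; rewrite -h3; lia.
Qed.

Lemma sum_coef_le (p : {poly F}) : (size p <= s)%N ->
  \sum_(k < s) 'X^k * (p`_k)%:P = p.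
Proof.
move=> sp; transitivity (\poly_(k < s) p`_k).
  by rewrite poly_def; apply: eq_bigr => k _; rewrite mulrC mul_polyC.
apply/polyP => k; rewrite coef_poly; case: ltnP => // h.
by rewrite nth_default // (leq_trans sp h).
Qed.
End Ker.

Unset Implicit Arguments.


Lemma size_mul1 (F : closedFieldType) (a b : {poly F}) : size a = 1%N -> size (a * b) = size b.
Proof.
move=> sa; have [->|b0] := eqVneq b 0; first by rewrite mulr0.
by rewrite size_mul ?sa // -size_poly_eq0 sa.
Qed.

Theorem theorem5p12 (F : closedFieldType) (char0 : [pchar F] =i pred0)
  (n s : nat) (A P Q : 'M[{poly F}]_n) (phi : 'I_n -> {poly F})
  (hA : \det A != 0) (hP : P \in unitmx) (hQ : Q \in unitmx)
  (hsmith : P *m A *m Q = diag_mx (\row_i phi i))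
  (hmonic : forall i, phi i \is monic)
  (hdiv : forall i j : 'I_n, (i <= j)%N -> phi i %| phi j)
  (hs : (1 <= s)%N) :
  (exists U : 'M[{poly F}]_n, U \in unitmx /\
     exists D : 'I_s -> 'M[F]_n,
       A *m U = 'X^s *: 1%:M - \sum_(i < s) 'X^i *: map_mx polyC (D i))
  <->
  ((size (\det A)).-1 = (n * s)%N /\
   \det (mx_of_rows (MGrows (P *m block_powers F n s) phi)) != 0).
Proof.
set N := (n * s)%N.
set B := block_powers F n s.
set G := P *m B.
set Mx := mx_of_rows (MGrows G phi).
have dP : size (\det P) = 1%N by move: hP; rewrite unitmxE poly_unitE => /andP[/eqP].
have dQ : size (\det Q) = 1%N by move: hQ; rewrite unitmxE poly_unitE => /andP[/eqP].
have detPAQ : \det P * \det A * \det Q = \prod_i phi i.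
  by rewrite -!det_mulmx hsmith det_diag; apply: eq_bigr => i _; rewrite mxE.
have sizeT : size (trip phi) = (size (\det A)).-1.
  by rewrite size_trip // -detPAQ mulrC size_mul1 // size_mul1.
have inColA : forall (c : 'cV[F]_N) (v : 'cV[{poly F}]_n),
  (forall i, phi i %| (G *m map_mx polyC c) i 0 - (P *m v) i 0) ->
  B *m map_mx polyC c - v =
    A *m (Q *m \col_i (((G *m map_mx polyC c) i 0 - (P *m v) i 0) %/ phi i)).
  move=> c v H.
  have E1 : P *m (B *m map_mx polyC c - v) =
      diag_mx (\row_i phi i) *m \col_i (((G *m map_mx polyC c) i 0 - (P *m v) i 0) %/ phi i).
    apply/matrixP => i j; rewrite ord1 mul_diag_mx mulmxBr mulmxA -/G !mxE.
    by rewrite mulrC divpK //; have := H i; rewrite !mxE.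
  rewrite -[LHS](mulKmx hP) E1 -hsmith -!mulmxA mulKmx //.
split.
  case=> U [hU [D hD]].
  have hD' : A *m U = monmx D by [].
  have sU : size (\det U) = 1%N by move: hU; rewrite unitmxE poly_unitE => /andP[/eqP].
  have sA : size (\det A) = N.+1.
    have := congr1 (fun M : 'M[{poly F}]_n => size (\det M)) hD'; rewrite /= det_mulmx size_det_monmx.
    by rewrite mulrC size_mul1.
  split; first by rewrite sA.
  have sT : size (trip phi) = N by rewrite sizeT sA.
  rewrite -det_tr; apply/negP => /det0P [v v0 vM].
  have [o [j _]] := matrix0Pn _ v0.
  have n0 : (0 < n)%N.
    by have := leq_ltn_trans (leq0n j) (ltn_ord j); rewrite muln_gt0 => /andP[].
  pose t0 := (Ordinal n0, 0 : F, 0%N).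
  pose c := v^T.
  have Mc : Mx *m c = \col_r (let t := nth t0 (trip phi) r in
        ((((0 : 'cV[{poly F}]_n)) t.1.1 0)^`(t.2)).[t.1.2]).
    rewrite /c -[Mx *m _]trmxK trmx_mul trmxK vM trmx0.
    by apply/matrixP => r k; rewrite !mxE raddf0 horner0.
  have Hd := Mdata char0 hmonic sT Mc.
  have E := inColA c 0.
  rewrite mulmx0 subr0 in E.
  have {E} E := E Hd.
  have AE : A = monmx D *m invmx U by rewrite -hD' mulmxK.
  rewrite AE -mulmxA in E.
  have w0 := monmx_ker (esym E).
  rewrite w0 mulmx0 in E.
  have c0 := Bc_inj E.
  by move/negP: v0; apply; rewrite -[v]trmxK -/c c0 trmx0.
case=> hsA hM.
have sA : size (\det A) = N.+1 by rewrite -hsA prednK // size_poly_gt0.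
have sT : size (trip phi) = N by rewrite sizeT sA.
have uM : Mx \in unitmx by rewrite unitmxE unitfE.
pose vj (j : 'I_n) : 'cV[{poly F}]_n := \col_i (if i == j then 'X^s else 0).
pose dj (j : 'I_n) : 'cV[F]_N := \col_r (let t := nth (j, 0 : F, 0%N) (trip phi) r in
        (((P *m vj j) t.1.1 0)^`(t.2)).[t.1.2]).
pose cj (j : 'I_n) := invmx Mx *m dj j.
pose wj (j : 'I_n) := Q *m \col_i (((G *m map_mx polyC (cj j)) i 0 - (P *m vj j) i 0) %/ phi i).
have Ej : forall j, B *m map_mx polyC (cj j) - vj j = A *m wj j.
  move=> j; apply: inColA; apply: (Mdata char0 hmonic sT).
  by rewrite /cj mulKVmx.
pose W := \matrix_(i, j) - (wj j) i 0.
pose D (k : 'I_s) := \matrix_(i, j) ((B *m map_mx polyC (cj j)) i 0)`_k.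
have hAW : A *m W = monmx D.
  apply/matrixP => i j; rewrite monmx_entry.
  have -> : (A *m W) i j = - (A *m wj j) i 0.
    by rewrite !mxE -sumrN; apply: eq_bigr => l _; rewrite !mxE mulrN.
  rewrite -Ej.
  have -> : (B *m map_mx polyC (cj j) - vj j) i 0 = (B *m map_mx polyC (cj j)) i 0 - vj j i 0.
    by rewrite [LHS]mxE [(- vj j) i 0]mxE.
  rewrite opprB [vj j i 0]mxE; congr (_ - _).
  rewrite /qmx; under eq_bigr do rewrite mxE.
  by rewrite sum_coef_le // size_Bc.
exists W; split; last by exists D.
have sW : size (\det W) = 1%N.
  have := congr1 (fun M : 'M[{poly F}]_n => size (\det M)) hAW.
  rewrite /= det_mulmx size_det_monmx.
  have [->|W0] := eqVneq (\det W) 0; first by rewrite mulr0 size_poly0.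
  rewrite size_mul // sA.
  have : (0 < size (\det W))%N by rewrite size_poly_gt0.
  move=> h1; rewrite /N addSn /= -addn1 => h2; exact: (addnI h2).
rewrite unitmxE poly_unitE sW eqxx /= unitfE.
have /size_poly1P [a a0 ->] : size (\det W) == 1%N by rewrite sW.
by rewrite coefC.
Qed.
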